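(* Let $R$ be a Hermite ring and $X$ a (commuting) indeterminate over $R$ such that the formal power series ring $R[[X]]$ is a Bézout ring. Then $R[[X]]$ is a Hermite ring.
   Context: A matrix $A$ over a ring admits a diagonal reduction if there are invertible matrices $P,Q$ with $PAQ$ diagonal (i.e. entries $a_{ij}=0$ for $i\neq j$). A ring is right Hermite if every $1\times 2$ matrix over it admits a diagonal reduction (left Hermite: every $2\times 1$ matrix). Here ''Hermite'' means right Hermite. A ring is Bézout if every finitely generated ideal is principal. *)

(* Defs.v *)
From HB Require Import structures.
From mathcomp Require Import all_boot all_order all_algebra.
From mathcomp Require Import boolp.
Set Implicit Arguments. Unset Strict Implicit. Unset Printing Implicit Defensive.
Import GRing.Theory.
Local Open Scope ring_scope.

(* Formal power series R[[X]] over a (not necessarily commutative) ring R,   *)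
(* with X a commuting (central) indeterminate: the coefficient sequences     *)
(* with pointwise addition and Cauchy-product multiplication.                *)
Section FPS.
Variable R : nzRingType.

Variant fps := FPS of nat -> R.
Definition fcoef (f : fps) : nat -> R := let: FPS g := f in g.

HB.instance Definition _ := gen_eqMixin fps.
HB.instance Definition _ := gen_choiceMixin fps.

Lemma fpsP (f g : fps) : (forall n, fcoef f n = fcoef g n) -> f = g.
Proof. by case: f g => [f] [g] /= H; congr FPS; apply: funext. Qed.

Definition fps0 := FPS (fun _ => 0).
Definition fps_add f g := FPS (fun n => fcoef f n + fcoef g n).
Definition fps_opp f := FPS (fun n => - fcoef f n).
Definition fps1 := FPS (fun n => if n == 0%N then 1 else 0).
Definition fps_mul f g :=
  FPS (fun i => \sum_(j < i.+1) fcoef f j * fcoef g (i - j)).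

Fact fps_addA : associative fps_add.
Proof. by move=> f g h; apply: fpsP => n /=; rewrite addrA. Qed.
Fact fps_addC : commutative fps_add.
Proof. by move=> f g; apply: fpsP => n /=; rewrite addrC. Qed.
Fact fps_add0 : left_id fps0 fps_add.
Proof. by move=> f; apply: fpsP => n /=; rewrite add0r. Qed.
Fact fps_addN : left_inverse fps0 fps_opp fps_add.
Proof. by move=> f; apply: fpsP => n /=; rewrite addNr. Qed.

HB.instance Definition _ :=
  GRing.isZmodule.Build fps fps_addA fps_addC fps_add0 fps_addN.

Lemma fcoef0 n : fcoef 0 n = 0. Proof. by []. Qed.

Fact fps_mulE f g i :
  fcoef (fps_mul f g) i = \sum_(j < i.+1) fcoef f j * fcoef g (i - j).
Proof. by []. Qed.

Fact fps_mul_rev f g i :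
  fcoef (fps_mul f g) i = \sum_(j < i.+1) fcoef f (i - j) * fcoef g j.
Proof.
rewrite /= (reindex_inj rev_ord_inj) /=.
by apply: eq_bigr => j _; rewrite (sub_ordK j).
Qed.

Fact fps_mulA : associative fps_mul.
Proof.
move=> p q r; apply: fpsP => i; rewrite [RHS]fps_mul_rev [LHS]fps_mulE.
pose coef3 j k := fcoef p j * (fcoef q (i - j - k) * fcoef r k).
transitivity (\sum_(j < i.+1) \sum_(k < i.+1 | (k <= i - j)%N) coef3 j k).
  apply: eq_bigr => j _; rewrite fps_mul_rev big_distrr /=.
  by rewrite (big_ord_narrow_leq (leq_subr _ _)).
rewrite (exchange_big_dep predT) //=; apply: eq_bigr => k _.
transitivity (\sum_(j < i.+1 | (j <= i - k)%N) coef3 j k).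
  apply: eq_bigl => j; rewrite -ltnS -(ltnS j) -!subSn ?leq_ord //.
  by rewrite -subn_gt0 -(subn_gt0 j) -!subnDA addnC.
rewrite (big_ord_narrow_leq (leq_subr _ _)) big_distrl /=.
by apply: eq_bigr => j _; rewrite /coef3 -!subnDA addnC mulrA.
Qed.

Fact fps_mul1 : left_id fps1 fps_mul.
Proof.
move=> p; apply: fpsP => i; rewrite /= big_ord_recl /= mul1r subn0.
by rewrite big1 ?addr0 // => j _; rewrite mul0r.
Qed.

Fact fps_mulr1 : right_id fps1 fps_mul.
Proof.
move=> p; apply: fpsP => i; rewrite fps_mul_rev big_ord_recl /= mulr1 subn0.
by rewrite big1 ?addr0 // => j _; rewrite mulr0.
Qed.

Fact fps_mulDl : left_distributive fps_mul +%R.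
Proof.
move=> p q r; apply: fpsP => i; rewrite /= -big_split.
by apply: eq_bigr => j _; rewrite mulrDl.
Qed.

Fact fps_mulDr : right_distributive fps_mul +%R.
Proof.
move=> p q r; apply: fpsP => i; rewrite /= -big_split.
by apply: eq_bigr => j _; rewrite mulrDr.
Qed.

Fact fps1_neq0 : fps1 != 0.
Proof.
apply/eqP => /(congr1 (fun f => fcoef f 0%N)) /= /eqP.
by rewrite oner_eq0.
Qed.

HB.instance Definition _ := GRing.Zmodule_isNzRing.Build fps
  fps_mulA fps_mul1 fps_mulr1 fps_mulDl fps_mulDr fps1_neq0.

End FPS.

Notation "R [[ 'X' ]]" := (fps R) (at level 2, format "R [[ 'X' ]]").

Definition invertible_mx (R : nzRingType) (n : nat) (P : 'M[R]_n) : Prop :=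
  exists Q : 'M[R]_n, P *m Q = 1%:M /\ Q *m P = 1%:M.

Definition diag_reduction (R : nzRingType) (m n : nat) (A : 'M[R]_(m, n)) : Prop :=
  exists (P : 'M[R]_m) (Q : 'M[R]_n),
    [/\ invertible_mx P, invertible_mx Q &
        forall (i : 'I_m) (j : 'I_n), (i : nat) <> j -> (P *m A *m Q) i j = 0].

Definition right_Hermite (R : nzRingType) : Prop :=
  forall A : 'M[R]_(1, 2), diag_reduction A.

Definition Hermite (R : nzRingType) : Prop := right_Hermite R.

Definition right_Bezout (R : nzRingType) : Prop :=
  forall (n : nat) (s : 'I_n -> R), exists d : R,
    (exists r : 'I_n -> R, d = \sum_(i < n) s i * r i) /\
    (forall i, exists t : R, s i = d * t).

Definition left_Bezout (R : nzRingType) : Prop :=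
  forall (n : nat) (s : 'I_n -> R), exists d : R,
    (exists r : 'I_n -> R, d = \sum_(i < n) r i * s i) /\
    (forall i, exists t : R, s i = t * d).

Definition Bezout (R : nzRingType) : Prop := left_Bezout R /\ right_Bezout R.

(* Main.v *)
Require Import Defs.
From HB Require Import structures.
From mathcomp Require Import all_boot all_order all_algebra.
Set Implicit Arguments. Unset Strict Implicit. Unset Printing Implicit Defensive.
Import GRing.Theory.
Local Open Scope ring_scope.

Notation i1 := (lift ord0 ord0 : 'I_2).
Definition mk2 (T : nzRingType) (a b c d : T) : 'M[T]_2 :=
  \matrix_(i, j) if (i : nat) == 0%N then (if (j : nat) == 0%N then a else b)
                 else (if (j : nat) == 0%N then c else d).

Lemma mul_mk2 (T : nzRingType) (a b c d a' b' c' d' : T) :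
  mk2 a b c d *m mk2 a' b' c' d' =
  mk2 (a*a' + b*c') (a*b'+b*d') (c*a'+d*c') (c*b'+d*d').
Proof.
apply/matrixP => i j; rewrite !mxE !big_ord_recl big_ord0 !mxE /= addr0.
by case: i => [ [|[|ii] ] Hi] //; case: j => [ [|[|jj] ] Hj].
Qed.

Lemma add_mk2 (T : nzRingType) (a b c d a' b' c' d' : T) :
  mk2 a b c d + mk2 a' b' c' d' = mk2 (a+a') (b+b') (c+c') (d+d').
Proof.
apply/matrixP => i j; rewrite !mxE.
by case: i => [ [|[|ii] ] Hi] //; case: j => [ [|[|jj] ] Hj].
Qed.

Lemma eta2 (T : nzRingType) (M : 'M[T]_2) :
  M = mk2 (M ord0 ord0) (M ord0 i1) (M i1 ord0) (M i1 i1).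
Proof.
apply/matrixP => i j; rewrite !mxE.
case: i => [ [|[|ii] ] Hi] //; case: j => [ [|[|jj] ] Hj] //; congr (M _ _); exact: val_inj.
Qed.

Lemma one_mk2 (T : nzRingType) : (1%:M : 'M[T]_2) = mk2 1 0 0 1.
Proof.
apply/matrixP => i j; rewrite !mxE.
by case: i => [ [|[|ii] ] Hi] //; case: j => [ [|[|jj] ] Hj].
Qed.

Lemma mk2_inj (T : nzRingType) (a b c d a' b' c' d' : T) :
  mk2 a b c d = mk2 a' b' c' d' -> [/\ a = a', b = b', c = c' & d = d'].
Proof.
move=> H; have E (i j : 'I_2) := congr1 (fun M : 'M[T]_2 => M i j) H.
move: (E ord0 ord0) (E ord0 i1) (E i1 ord0) (E i1 i1).
by rewrite !mxE /=.
Qed.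

Section F.
Variable R : nzRingType.
Lemma fcoefM (f g : R[[X]]) n : fcoef (f * g) n = \sum_(j < n.+1) fcoef f j * fcoef g (n - j).
Proof. by []. Qed.
Lemma fcoefD (f g : R[[X]]) n : fcoef (f + g) n = fcoef f n + fcoef g n.
Proof. by []. Qed.
Lemma fcoefN (f : R[[X]]) n : fcoef (- f) n = - fcoef f n.
Proof. by []. Qed.
Lemma fcoef1 n : fcoef (1 : R[[X]]) n = if n == 0%N then 1 else 0.
Proof. by []. Qed.
End F.
Section Inv.
Variable R : nzRingType.
Variable h : nat -> R.
Variable mul : R -> R -> R.

Fixpoint ws (n : nat) : seq R :=
  if n is m.+1 then
    rcons (ws m) (- \sum_(j < m.+1) mul (h (m.+1 - j)) (nth 0 (ws m) j))
  else [:: 1].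

Lemma size_ws n : size (ws n) = n.+1.
Proof. by elim: n => //= n IH; rewrite size_rcons IH. Qed.

Lemma nth_ws n m j : (j <= n)%N -> (n <= m)%N -> nth 0 (ws m) j = nth 0 (ws n) j.
Proof.
move=> jn; elim: m => [|m IH]; first by rewrite leqn0 => /eqP ->.
rewrite leq_eqVlt => /orP [/eqP -> //|]; rewrite ltnS => nm.
by rewrite /= nth_rcons size_ws ltnS (leq_trans jn nm) IH.
Qed.

Definition wf j := nth 0 (ws j) j.

Lemma wf0 : wf 0 = 1. Proof. by []. Qed.

Lemma wfS n : wf n.+1 = - \sum_(j < n.+1) mul (h (n.+1 - j)) (wf j).
Proof.
rewrite /wf /= nth_rcons size_ws ltnn eqxx; congr (- _).
by apply: eq_bigr => j _; rewrite /wf (nth_ws (leqnn j)) // -ltnS.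
Qed.
End Inv.

Lemma fps_unit (R : nzRingType) (h : R[[X]]) : fcoef h 0 = 1 ->
  exists w : R[[X]], h * w = 1 /\ w * h = 1.
Proof.
move=> h0.
pose w := FPS (wf (fcoef h) *%R).
pose v := FPS (wf (fcoef h) (fun x y => y * x)).
have hw : h * w = 1.
  apply: fpsP => n; rewrite fps_mul_rev.
  case: n => [|n]; first by rewrite big_ord_recl big_ord0 addr0 /= h0 mulr1.
  rewrite big_ord_recr /= subnn h0 mul1r wfS.
  by rewrite addrN.
have vh : v * h = 1.
  apply: fpsP => n; rewrite fps_mulE.
  case: n => [|n]; first by rewrite big_ord_recl big_ord0 addr0 /= h0 mulr1.
  rewrite big_ord_recr /= subnn h0 mulr1 wfS.
  by rewrite addrN.
exists w; split => //.
have -> : w = v by rewrite -[v]mulr1 -hw mulrA vh mul1r.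
exact: vh.
Qed.

Section CT.
Variable R : nzRingType.
Definition C (c : R) : R[[X]] := FPS (fun n => if n == 0%N then c else 0).
Definition ct (f : R[[X]]) : R := fcoef f 0.

Lemma ctM f g : ct (f * g) = ct f * ct g.
Proof. by rewrite /ct fcoefM big_ord_recl big_ord0 addr0. Qed.
Lemma ctD f g : ct (f + g) = ct f + ct g. Proof. by []. Qed.
Lemma ctN f : ct (- f) = - ct f. Proof. by []. Qed.
Lemma ctB f g : ct (f - g) = ct f - ct g. Proof. by []. Qed.
Lemma ct1 : ct 1 = 1. Proof. by []. Qed.
Lemma ct0 : ct 0 = 0. Proof. by []. Qed.
Lemma ctC c : ct (C c) = c. Proof. by []. Qed.

Lemma CD a b : C (a + b) = C a + C b.
Proof. apply: fpsP => n; rewrite fcoefD /=; by case: n => [|n] //=; rewrite addr0. Qed.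
Lemma CN a : C (- a) = - C a.
Proof. apply: fpsP => n; rewrite fcoefN /=; by case: n => [|n] //=; rewrite oppr0. Qed.
Lemma C1 : C 1 = 1. Proof. by apply: fpsP => n. Qed.
Lemma C0 : C 0 = 0. Proof. by apply: fpsP => n /=; case: ifP. Qed.
Lemma CM a b : C (a * b) = C a * C b.
Proof.
apply: fpsP => n; rewrite fcoefM big_ord_recl /= subn0 big1 ?addr0.
  by case: n => [|n] //=; rewrite mulr0.
by move=> j _; rewrite /= mul0r.
Qed.
Lemma CB a b : C (a - b) = C a - C b. Proof. by rewrite CD CN. Qed.
End CT.
Arguments ct : simpl never.
Arguments C : simpl never.

Lemma m00 (T : nzRingType) (a b c d : T) : mk2 a b c d ord0 ord0 = a.
Proof. by rewrite !mxE. Qed.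
Lemma m01 (T : nzRingType) (a b c d : T) : mk2 a b c d ord0 i1 = b.
Proof. by rewrite !mxE. Qed.
Lemma m10 (T : nzRingType) (a b c d : T) : mk2 a b c d i1 ord0 = c.
Proof. by rewrite !mxE. Qed.
Lemma m11 (T : nzRingType) (a b c d : T) : mk2 a b c d i1 i1 = d.
Proof. by rewrite !mxE. Qed.

Lemma inv_mul (T : nzRingType) n (P Q : 'M[T]_n) :
  invertible_mx P -> invertible_mx Q -> invertible_mx (P *m Q).
Proof.
move=> [P' [h1 h2] ] [Q' [h3 h4] ]; exists (Q' *m P'); split.
  by rewrite mulmxA -(mulmxA P) h3 mulmx1 h1.
by rewrite mulmxA -(mulmxA Q') h2 mulmx1 h4.
Qed.

Ltac simp := rewrite ?(mulr0,mul0r,mulr1,mul1r,add0r,addr0,mulrN1,mulN1r,opprK,addNr,addrN,subr0,sub0r,oppr0).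

Lemma inv_E1 (T : nzRingType) (c : T) : invertible_mx (mk2 c 1 (-1) 0).
Proof.
exists (mk2 0 (-1) 1 c); rewrite !mul_mk2 one_mk2; simp; split => //.
Qed.

Lemma inv_E2 (T : nzRingType) (z : T) : invertible_mx (mk2 1 (-z) 0 1).
Proof.
by exists (mk2 1 z 0 1); rewrite !mul_mk2 one_mk2; simp.
Qed.

Lemma i1_neq0 : (i1 : nat) = 1%N. Proof. by []. Qed.

Theorem proposition3p1 (R : nzRingType) :
  Hermite R -> Bezout (R[[X]]) -> Hermite (R[[X]]).
Proof.
move=> hR [_ hB] A.
set f := A ord0 ord0; set g := A ord0 i1.
have [d [ [r Hr] Hdiv] ] := hB 2%N (fun i => A ord0 i).
set x := r ord0; set y := r i1.
have Hd : d = f * x + g * y by rewrite Hr big_ord_recl big_ord1.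
have [a fa] := Hdiv ord0; have [b gb] := Hdiv i1.
rewrite -/f in fa; rewrite -/g in gb.
pose e := 1 - a * x - b * y.
have de : d * e = 0.
  rewrite /e !mulrBr mulr1 !mulrA -fa -gb {1}Hd.
  by rewrite addrAC addrK subrr.
pose A0 : 'M[R]_(1, 2) := \row_(j < 2) (if (j : nat) == 0%N then ct a else ct b).
have [P0 [Q0 [ [P0' [HP1 HP2] ] [W [HQ1 HQ2] ] Hz] ] ] := hR A0.
pose Z := P0 *m A0 *m Q0.
have A0E : A0 = P0' *m Z *m W.
  by rewrite /Z !mulmxA HP2 mul1mx -!mulmxA HQ1 mulmx1.
pose c := (P0' *m Z) ord0 ord0.
have Zc : (P0' *m Z) ord0 i1 = 0.
  by rewrite mxE big_ord1 Hz ?mulr0.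
have A0j j : A0 ord0 j = c * W ord0 j.
  by rewrite A0E mxE big_ord_recl big_ord1 Zc mul0r addr0.
have ca : ct a = c * W ord0 ord0 by rewrite -A0j mxE.
have cb : ct b = c * W ord0 i1 by rewrite -A0j mxE.
set w00 := W ord0 ord0; set w01 := W ord0 i1; set w10 := W i1 ord0; set w11 := W i1 i1.
have WE := eta2 W; have QE := eta2 Q0.
pose WS := mk2 (C w00) (C w01) (C w10) (C w11).
have WSi : invertible_mx WS.
  exists (mk2 (C (Q0 ord0 ord0)) (C (Q0 ord0 i1)) (C (Q0 i1 ord0)) (C (Q0 i1 i1))).
  move: HQ1 HQ2; rewrite {1 2}WE {1 2}QE !mul_mk2 one_mk2.
  move=> /mk2_inj [e1 e2 e3 e4] /mk2_inj [e5 e6 e7 e8].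
  rewrite -!CM -!CD e1 e2 e3 e4 e5 e6 e7 e8 C1 C0 one_mk2; by split.
pose z := w00 * ct x + w01 * ct y.
pose E1 := mk2 (C c) 1 (-1) 0; pose E2 := mk2 1 (- C z) 0 1.
pose K := E1 *m E2 *m WS.
have Ki : invertible_mx K by apply: inv_mul; [apply: inv_mul; [apply: inv_E1|apply: inv_E2]|].
have K0 : ct (K ord0 ord0) = ct (a + e * C w10).
  rewrite /K /E1 /E2 /WS !mul_mk2 m00 !(ctD, ctM, ctC, ctN, ctB, ct1, ct0).
  simp; rewrite ca cb; congr (_ + _ * _).
  by rewrite /z mulrN mulrDr !mulrA addrC opprD addrA.
have K1 : ct (K ord0 i1) = ct (b + e * C w11).
  rewrite /K /E1 /E2 /WS !mul_mk2 m01 !(ctD, ctM, ctC, ctN, ctB, ct1, ct0).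
  simp; rewrite ca cb; congr (_ + _ * _).
  by rewrite /z mulrN mulrDr !mulrA addrC opprD addrA.
pose a' := a + e * C w10; pose b' := b + e * C w11.
have fa' : f = d * a' by rewrite /a' mulrDr mulrA de mul0r addr0.
have gb' : g = d * b' by rewrite /b' mulrDr mulrA de mul0r addr0.
have [Kinv [HK1 HK2] ] := Ki.
pose D := mk2 (a' - K ord0 ord0) (b' - K ord0 i1) 0 0.
pose T := 1%:M + D *m Kinv.
pose M := T *m K.
have MK : M = mk2 a' b' (K i1 ord0) (K i1 i1).
  rewrite /M /T mulmxDl mul1mx -mulmxA HK2 mulmx1 {1}(eta2 K) /D add_mk2.
  by rewrite !addr0 ![K _ _ + _]addrC !subrK.
pose h := 1 + ((a' - K ord0 ord0) * Kinv ord0 ord0 + (b' - K ord0 i1) * Kinv i1 ord0).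
pose k2 := (a' - K ord0 ord0) * Kinv ord0 i1 + (b' - K ord0 i1) * Kinv i1 i1.
have TE : T = mk2 h k2 0 1.
  by rewrite /T {1}(eta2 Kinv) /D mul_mk2 one_mk2 add_mk2; simp.
have h0 : fcoef h 0 = 1.
  have cA : ct (a' - K ord0 ord0) = 0 by rewrite ctB K0 subrr.
  have cB : ct (b' - K ord0 i1) = 0 by rewrite ctB K1 subrr.
  by rewrite -/(ct h) /h ctD ctD !ctM cA cB ct1 !mul0r !addr0.
have [hinv [hh1 hh2] ] := fps_unit h0.
have Ti : invertible_mx T.
  exists (mk2 hinv (-(hinv * k2)) 0 1); rewrite TE !mul_mk2 one_mk2; simp.
  by rewrite mulrN mulrA hh1 mul1r addNr hh2.
have [N [MN NM] ] : invertible_mx M by apply: inv_mul.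
exists 1%:M, N; split.
- by exists 1%:M; rewrite mul1mx.
- by exists M.
move=> i j; rewrite (ord1 i) mul1mx => Hij.
have := congr1 (fun X : 'M_2 => X ord0 j) MN.
rewrite MK /=; move=> H; rewrite mxE big_ord_recl big_ord1 m00 m01 mxE in H.
have E0 : (ord0 == j) = false by apply/eqP => E; apply: Hij; rewrite -E.
rewrite E0 in H; rewrite mxE !big_ord_recl big_ord0 addr0.
rewrite -/f -/g fa' gb' -!mulrA -mulrDr H.
by rewrite mulr0.
Qed.
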